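(* For all positive integers $n,k$ with $k\le n$, \[ \overline{M}_k(n)=\sum_{d\mid n}\varphi(d)\sum_{\substack{\delta\mid n\\ \gcd(\delta,d)=1}}\mu(\delta)\sum_{\substack{1\le j\le n/\delta\\ \delta j\equiv 1 \ (\mathrm{mod}\ d)}} f_k\!\left(\left\lfloor \frac{n}{j\delta}\right\rfloor\right), \] where $d$ and $\delta$ run over the positive divisors of $n$, and for $d=1$ the congruence condition is vacuous.
   Context: For a nonempty finite set $A$ of positive integers, $(A)$ denotes the greatest common divisor of the elements of $A$. $\varphi$ is Euler's totient function and $\mu$ is the Möbius function. For $m,k\in\mathbb{N}$, $f_k(m)$ is the number of $k$-element subsets $A\subseteq\{1,2,\ldots,m\}$ with $(A)=1$ (so $f_k(m)=0$ if $m<k$; equivalently $f_k(m)=\sum_{d=1}^m\mu(d)\binom{\lfloor m/d\rfloor}{k}$). For $1\le k\le n$ define \[ \overline{M}_k(n)=\sum_{\substack{A\subseteq\{1,\ldots,n\},\ \#A=k\\ \gcd((A),n)=1}}\gcd((A)-1,n), \] the sum over all $k$-element subsets $A$ of $\{1,\ldots,n\}$ with $\gcd((A),n)=1$, with the convention $\gcd(0,n)=n$. *)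

(* Defs.v *)
From mathcomp Require Import all_boot all_order all_algebra.
Set Implicit Arguments. Unset Strict Implicit. Unset Printing Implicit Defensive.
Import GRing.Theory Num.Theory.

(* Subsets of {1,...,m} are encoded as sets A : {set 'I_m.+1} with 0 \notin A. *)

Definition setgcd (m : nat) (A : {set 'I_m.+1}) : nat :=
  \big[gcdn/0]_(i in A) (i : nat).

Definition ksubsets (m k : nat) : {set {set 'I_m.+1}} :=
  [set A : {set 'I_m.+1} | (ord0 \notin A) && (#|A| == k)].

Definition moebius (n : nat) : int :=
  if n == 0 then 0%R
  else if all (fun p => logn p n == 1) (primes n)
       then ((-1) ^+ size (primes n))%R else 0%R.

Definition fk (k m : nat) : nat :=
  #|[set A in ksubsets m k | setgcd A == 1]|.

Definition Mbar (k n : nat) : nat :=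
  \sum_(A in ksubsets n k | coprime (setgcd A) n) gcdn (setgcd A).-1 n.

(* Main.v *)
Require Import Defs.
From mathcomp Require Import all_boot all_order all_algebra.
From mathcomp Require Import cyclic zify.
Import GRing.Theory Num.Theory.
Set Implicit Arguments. Unset Strict Implicit. Unset Printing Implicit Defensive.

Section BigDiv.
Variables (R : Type) (idx : R) (op : Monoid.com_law idx).

Lemma big_div_filter n m (F : nat -> R) : (0 < n)%N ->
  \big[op/idx]_(d <- divisors n | d %| m) F d =
  \big[op/idx]_(d <- divisors (gcdn m n)) F d.
Proof.
move=> n0; rewrite -big_filter; apply: perm_big; apply: uniq_perm.
- by rewrite filter_uniq // divisors_uniq.
- exact: divisors_uniq.
move=> d; rewrite mem_filter -!dvdn_divisors ?gcdn_gt0 ?n0 ?orbT //.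
by rewrite dvdn_gcd.
Qed.

Lemma big_ord_divisors n (F : nat -> R) : (0 < n)%N ->
  \big[op/idx]_(d < n.+1 | d %| n) F d = \big[op/idx]_(d <- divisors n) F d.
Proof.
move=> n0; rewrite -(big_mkord (fun d => d %| n)) -big_filter.
apply: perm_big; apply: uniq_perm.
- by rewrite filter_uniq // iota_uniq.
- exact: divisors_uniq.
move=> d; rewrite mem_filter mem_index_iota -dvdn_divisors //.
case dn: (d %| n) => //=.
by rewrite ltnS dvdn_leq.
Qed.
End BigDiv.

Lemma moeb1 : moebius 1 = 1%R.
Proof. by []. Qed.

Lemma div1 : divisors 1 = [:: 1%N].
Proof. by []. Qed.

Lemma moebM_dvd p d : prime p -> (0 < d)%N -> p %| d -> moebius (p * d) = 0%R.
Proof.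
move=> pp d0 pd; rewrite /moebius muln_eq0 !eqn0Ngt prime_gt0 // d0 /=.
case: ifP => // /allP H.
have : p \in primes (p * d) by rewrite mem_primes pp muln_gt0 prime_gt0 // d0 dvdn_mulr.
move/H; rewrite (lognM _ (prime_gt0 pp) d0).
have : (0 < logn p d)%N by rewrite logn_gt0 mem_primes pp d0.
by rewrite (logn_prime _ pp) eqxx; case: (logn p d).
Qed.

Lemma moebM_ndvd p d : prime p -> (0 < d)%N -> ~~ (p %| d) ->
  moebius (p * d) = (- moebius d)%R.
Proof.
move=> pp d0 pd.
have pe : perm_eq (primes (p * d)) (p :: primes d).
  apply: uniq_perm; first exact: primes_uniq.
    by rewrite /= primes_uniq mem_primes pp d0 (negbTE pd).
  move=> q; rewrite in_cons !mem_primes muln_gt0 prime_gt0 // d0 /=.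
  case qp: (prime q) => /=; last by rewrite orbF; case: eqP => // E; by rewrite E pp in qp.
  by rewrite Euclid_dvdM // dvdn_prime2 // eq_sym.
rewrite /moebius muln_eq0 !eqn0Ngt prime_gt0 // d0 /=.
rewrite (perm_size pe) (perm_all _ pe) /= (lognM _ (prime_gt0 pp) d0) (logn_prime _ pp).
rewrite eqxx logn_coprime ?prime_coprime // addn0 eqxx /=.
rewrite (@eq_in_all _ _ (fun q => logn q d == 1)); last first.
  move=> q; rewrite mem_primes => /and3P[qp _ qd].
  rewrite (lognM _ (prime_gt0 pp) d0) (logn_prime _ pp).
  have qp' : (q == p) = false by apply/eqP => E; rewrite -E qd in pd.
  by rewrite qp'.
by case: ifP => _; rewrite ?oppr0 // exprS mulN1r.
Qed.

Lemma moebius_sum m : (0 < m)%N ->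
  (\sum_(d <- divisors m) moebius d)%R = ((m == 1)%N%:R)%R.
Proof.
move=> m0; case: (ltngtP m 1) => [|m1|->]; first by lia.
  2: by rewrite div1 big_seq1.
have pp := pdiv_prime m1; set p := pdiv m in pp *.
have pm : p %| m by exact: pdiv_dvd.
set m1' := m %/ p.
have em : m = p * m1' by rewrite /m1' mulnC divnK.
have m10 : (0 < m1')%N by move: m0; rewrite em muln_gt0 => /andP[].
have divpos : forall x, x \in divisors m1' -> (0 < x)%N.
  by move=> x; rewrite -dvdn_divisors // => /dvdn_gt0; apply.
rewrite (bigID (dvdn p)) /=.
have -> : (\sum_(d <- divisors m | (p %| d)%N) moebius d =
           \sum_(d <- divisors m1') moebius (p * d))%R.
  rewrite -big_filter -(big_map (muln p) xpredT); apply: perm_big.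
  apply: uniq_perm.
  - by rewrite filter_uniq // divisors_uniq.
  - rewrite map_inj_in_uniq ?divisors_uniq // => x y _ _ /eqP.
    by rewrite eqn_pmul2l ?prime_gt0 // => /eqP.
  move=> x; rewrite mem_filter -dvdn_divisors //.
  apply/andP/mapP => [[/dvdnP[y ->] ym]|[y yd ->]].
    exists y; last by rewrite mulnC.
    by rewrite -dvdn_divisors // -(dvdn_pmul2l (prime_gt0 pp)) -em mulnC.
  by rewrite dvdn_mulr // em dvdn_pmul2l ?prime_gt0 // dvdn_divisors.
have -> : (\sum_(d <- divisors m | ~~ (p %| d)%N) moebius d =
           \sum_(d <- divisors m1' | ~~ (p %| d)%N) moebius d)%R.
  rewrite -big_filter -[RHS]big_filter; apply: perm_big; apply: uniq_perm.
  - by rewrite filter_uniq // divisors_uniq.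
  - by rewrite filter_uniq // divisors_uniq.
  move=> x; rewrite !mem_filter -!dvdn_divisors //.
  case px: (p %| x) => //=.
  by rewrite em Gauss_dvdr // coprime_sym prime_coprime // px.
rewrite (bigID (dvdn p)) /= big_seq_cond big1; last first.
  by move=> i /andP[/divpos i0 pi]; rewrite moebM_dvd.
rewrite add0r big_seq_cond (eq_bigr (fun i => - moebius i)%R); last first.
  by move=> i /andP[/divpos i0 pi]; rewrite moebM_ndvd.
rewrite sumrN -big_seq_cond addNr.
by [].
Qed.

Lemma setgcd_dvd m (A : {set 'I_m.+1}) (i : 'I_m.+1) : i \in A -> setgcd A %| i.
Proof. by move=> iA; rewrite /setgcd; apply: (biggcdn_inf i). Qed.

Lemma setgcd_bnd m k (A : {set 'I_m.+1}) : 0 < k -> A \in ksubsets m k ->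
  0 < setgcd A <= m.
Proof.
move=> k0; rewrite inE => /andP[A0 /eqP Ak].
have : 0 < #|A| by rewrite Ak.
case/card_gt0P => i iA.
have i0 : 0 < (i : nat).
  rewrite lt0n; apply: contraNneq A0 => E.
  by have -> : (ord0 : 'I_m.+1) = i by apply: val_inj.
have gi := setgcd_dvd iA.
rewrite (dvdn_gt0 i0 gi) /=.
by rewrite (leq_trans (dvdn_leq i0 gi)) // -ltnS.
Qed.

Section Scale.
Variables (n m : nat).
Hypothesis m0 : 0 < m.

Definition scl (x : 'I_(n %/ m).+1) : 'I_n.+1 := inord (m * x).

Lemma scl_val x : (scl x : nat) = m * x.
Proof.
rewrite inordK // ltnS (leq_trans _ (leq_divM n m)) // mulnC leq_mul2r.
by rewrite -ltnS ltn_ord orbT.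
Qed.

Lemma scl_inj : injective scl.
Proof.
move=> x y /(congr1 (@nat_of_ord _)); rewrite !scl_val => /eqP.
by rewrite eqn_pmul2l // => /eqP /val_inj.
Qed.

Lemma setgcd_scl (C : {set 'I_(n %/ m).+1}) : setgcd (scl @: C) = m * setgcd C.
Proof.
rewrite /setgcd big_imset /=; last by move=> x y _ _; apply: scl_inj.
under eq_bigr do rewrite scl_val.
by rewrite (big_morph (muln m) (muln_gcdr m) (muln0 m)).
Qed.

Lemma ord0_scl (C : {set 'I_(n %/ m).+1}) : (ord0 \in scl @: C) = (ord0 \in C).
Proof.
apply/imsetP/idP => [[x xC /(congr1 (@nat_of_ord _))]|C0].
  rewrite scl_val /= => /esym /eqP; rewrite muln_eq0 eqn0Ngt m0 /= => /eqP x0.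
  by have -> : (ord0 : 'I_(n %/ m).+1) = x by apply: val_inj.
exists ord0 => //; apply: ord_inj; by rewrite scl_val muln0.
Qed.

Lemma count_gcd k :
  #|[set A in ksubsets n k | setgcd A == m]| = fk k (n %/ m).
Proof.
rewrite /fk -(card_imset _ (imset_inj scl_inj)); apply: eq_card => A.
rewrite !inE; apply/idP/imsetP.
  case/andP => AS /eqP gA.
  pose C := [set x | scl x \in A].
  have eA : A = scl @: C.
    apply/setP => a; apply/idP/imsetP => [aA|[x]]; last by rewrite inE => xA ->.
    have ma : m %| a by rewrite -gA setgcd_dvd.
    have al : a %/ m < (n %/ m).+1 by rewrite ltnS leq_div2r // -ltnS.
    exists (inord (a %/ m)); last first.
      by apply: ord_inj; rewrite scl_val inordK // mulnC divnK.
    rewrite inE; have -> : scl (inord (a %/ m)) = a.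
      by apply: ord_inj; rewrite scl_val inordK // mulnC divnK.
    by [].
  clearbody C; exists C => //.
  move: AS gA; rewrite eA !inE ord0_scl card_imset ?setgcd_scl //; last exact: scl_inj.
  move=> /andP[C0 Ck] /eqP; rewrite -[X in _ == X](muln1 m) eqn_pmul2l // => g1.
  by rewrite C0 Ck g1.
case=> C; rewrite !inE => /andP[/andP[C0 Ck] /eqP gC] ->.
by rewrite ord0_scl card_imset ?setgcd_scl ?gC ?muln1 ?eqxx ?C0 ?Ck //; exact: scl_inj.
Qed.
End Scale.

Lemma mod1_pred g d : 0 < g -> (g == 1 %[mod d]) = (d %| g.-1).
Proof.
move=> g0; rewrite -{1}(prednK g0) -addn1 -{2}[1]add0n eqn_modDr mod0n.
by rewrite /dvdn.
Qed.

Lemma count_part n k de d : 0 < k -> 0 < de ->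
  \sum_(A in ksubsets n k) ((de %| setgcd A) && (d %| (setgcd A).-1) : nat) =
  \sum_(1 <= j < (n %/ de).+1 | de * j == 1 %[mod d]) fk k (n %/ (j * de)).
Proof.
move=> k0 de0.
rewrite big_nat_cond (eq_bigr (fun j => \sum_(A in ksubsets n k) (setgcd A == j * de : nat))); last first.
  move=> j /andP[/andP[j1 _] _]; rewrite -count_gcd ?muln_gt0 ?j1 ?de0 //.
  rewrite -sum1_card (eq_bigl (fun A => (A \in ksubsets n k) && (setgcd A == j * de))); last first.
    by move=> A; rewrite inE.
  by rewrite big_mkcondr /=; apply: eq_bigr => A _; case: (_ == _).
rewrite -big_nat_cond exchange_big /=; apply: eq_bigr => A AS.
have /andP[g0 gn] := setgcd_bnd k0 AS.
set g := setgcd A in g0 gn *.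
have [dg|ndg] := boolP (de %| g); last first.
  rewrite big1 // => j _; case: eqP => // E; by rewrite E dvdn_mull in ndg.
rewrite big_mkcond /= (bigD1_seq (g %/ de)) /=; last exact: iota_uniq.
  rewrite big1 ?addn0; last first.
    move=> j /negbTE nj; case: (_ == _ %[mod _]) => //.
    by rewrite eq_sym -eqn_div // nj.
  by rewrite mulnC divnK // eqxx mod1_pred //.
rewrite mem_index_iota divn_gt0 // dvdn_leq //= ltnS leq_div2r //.
Qed.

Lemma gcd_tot x n : 0 < n -> gcdn x n = \sum_(d <- divisors n | d %| x) totient d.
Proof.
move=> n0; rewrite big_div_filter // -big_ord_divisors ?gcdn_gt0 ?n0 ?orbT //.
by rewrite sum_totient_dvd.
Qed.

Lemma Mbar_split k n : 0 < n -> Mbar k n =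
  \sum_(d <- divisors n) totient d *
     \sum_(A in ksubsets n k) (coprime (setgcd A) n && (d %| (setgcd A).-1) : nat).
Proof.
move=> n0; rewrite /Mbar big_mkcondr /=.
symmetry; rewrite (eq_bigr (fun d => \sum_(A in ksubsets n k) totient d * (coprime (setgcd A) n && (d %| (setgcd A).-1) : nat))); last by move=> d _; rewrite big_distrr.
rewrite exchange_big /=; apply: eq_bigr => A _; symmetry.
case: (coprime _ _) => /=; last by rewrite big1 // => d _; rewrite muln0.
rewrite gcd_tot // big_mkcond /=; apply: eq_bigr => d _.
by case: (d %| _); rewrite ?muln1 ?muln0.
Qed.

Lemma inner n k d : 0 < n -> 0 < k -> 0 < d ->
  ((\sum_(A in ksubsets n k) (coprime (setgcd A) n && (d %| (setgcd A).-1) : nat))%:Z =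
  \sum_(delta <- divisors n | coprime delta d) moebius delta *
      \sum_(1 <= j < (n %/ delta).+1 | (delta * j == 1 %[mod d])%N)
        (fk k (n %/ (j * delta)))%:Z)%R.
Proof.
move=> n0 k0 d0.
rewrite -natz natr_sum.
have step : forall A, A \in ksubsets n k ->
  (((coprime (setgcd A) n && (d %| (setgcd A).-1) : nat))%:R : int) =
  (\sum_(delta <- divisors n | coprime delta d) moebius delta *
      ((delta %| setgcd A)%N && (d %| (setgcd A).-1)%N : nat)%:R)%R.
  move=> A AS; have /andP[g0 _] := setgcd_bnd k0 AS.
  set g := setgcd A in g0 *.
  have -> : (((coprime g n && (d %| g.-1) : nat))%:R : int) =
     (((coprime g n : nat)%:R : int) * ((d %| g.-1 : nat)%:R))%R.
    by case: (coprime _ _); case: (_ %| _); rewrite ?mulr1 ?mulr0.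
  rewrite /coprime -moebius_sum ?gcdn_gt0 ?g0 // -big_div_filter // mulr_suml.
  rewrite big_mkcond [RHS]big_mkcond /=; apply: eq_bigr => de _.
  case dg: (de %| g)%N; last by case: (gcdn de d == 1); rewrite /= ?mulr0.
  case dg1: (d %| g.-1)%N; last by case: (gcdn de d == 1); rewrite /= ?mulr0.
  have -> : gcdn de d == 1.
    rewrite -dvdn1; have e : g = g.-1 + 1 by rewrite addn1 prednK.
    have h1 : gcdn de d %| g.-1 by apply: dvdn_trans (dvdn_gcdr _ _) _; rewrite dg1.
    have h2 : gcdn de d %| g by apply: dvdn_trans (dvdn_gcdl _ _) _; rewrite dg.
    by rewrite -(dvdn_addr 1 h1) -e.
  by [].
rewrite (eq_bigr _ step).
rewrite exchange_big /= big_seq_cond [RHS]big_seq_cond; apply: eq_bigr => de /andP[].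
rewrite -dvdn_divisors // => dn _.
have de0 : 0 < de by apply: dvdn_gt0 dn.
rewrite -mulr_sumr; congr (_ * _)%R.
rewrite -natr_sum count_part // natz.
by rewrite -natz natr_sum; apply: eq_bigr => j _; rewrite natz.
Qed.

Local Open Scope ring_scope.

Theorem mainTheorem2 (n k : nat) (hk : (0 < k)%N) (hkn : (k <= n)%N) :
  (Mbar k n)%:Z =
  \sum_(d <- divisors n) (totient d)%:Z *
    \sum_(delta <- divisors n | coprime delta d) moebius delta *
      \sum_(1 <= j < (n %/ delta).+1 | (delta * j == 1 %[mod d])%N)
        (fk k (n %/ (j * delta)))%:Z.
Proof.
have n0 : (0 < n)%N by apply: leq_trans hkn.
rewrite (Mbar_split k n0) -natz natr_sum big_seq [RHS]big_seq; apply: eq_bigr => d.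
rewrite -dvdn_divisors // => dn.
have d0 : (0 < d)%N by apply: dvdn_gt0 dn.
by rewrite natrM natz -inner // natz.
Qed.
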